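(* Let $k\in\mathbb N$, $f=\lambda z+\mathrm{h.o.t.}\in\mathcal L_k$ with $0<\lambda<1$, and let $\beta>1$. Define $W_1\subseteq\mathbb R\times\mathbb Z^k$ as the additive semigroup generated by $$\mathrm{Supp}(f)\cup\{(\alpha-1,\boldsymbol m):(\alpha,\boldsymbol m)\in\mathrm{Supp}(f-\lambda\,\mathrm{id})\}\cup\{(0,1,0,\dots,0),\dots,(0,\dots,0,1)\},$$ inductively $W_{n+1}$ as the additive semigroup generated by $$W_n\cup\{(\beta_1,\boldsymbol m_1)+\cdots+(\beta_{n+1},\boldsymbol m_{n+1})-(n,\mathbf 0_k):(\beta_i,\boldsymbol m_i)\in W_n,\ \beta_i>1\},$$ and set $W:=\bigcup_{n\ge1}W_n$, $W_\beta:=W\cap(\mathbb R_{\ge\beta}\times\mathbb Z^k)$. Then $W_\beta$ is well-ordered (for the lexicographic order) and for every $m\ge2$ and all $(\beta_1,\boldsymbol m_1),\dots,(\beta_m,\boldsymbol m_m)\in W_\beta$, $$(\beta_1,\boldsymbol m_1)+\cdots+(\beta_m,\boldsymbol m_m)-(m-1,\mathbf 0_k)\in W_\beta.$$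
   Context: $z$ infinitesimal; $\boldsymbol\ell_1:=-1/\ln z$, $\boldsymbol\ell_{j+1}:=\boldsymbol\ell_j\circ\boldsymbol\ell_1$. $\mathcal L_k$: formal sums $\sum a_{\alpha,n_1,\dots,n_k}z^\alpha\boldsymbol\ell_1^{n_1}\cdots\boldsymbol\ell_k^{n_k}$, real coefficients, well-ordered support $\mathrm{Supp}(f)$ in $\mathbb R_{\ge0}\times\mathbb Z^k$ (lexicographic order). The vectors $(0,1,0,\dots,0),\dots,(0,\dots,0,1)$ are the unit vectors of $\mathbb R\times\mathbb Z^k$ in the $\mathbb Z^k$ coordinates; $\mathbf 0_k=(0,\dots,0)\in\mathbb Z^k$. *)

(* Defs.v *)
From HB Require Import structures.
From mathcomp Require Import all_boot all_order all_algebra.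
From mathcomp Require Import reals.
Set Implicit Arguments. Unset Strict Implicit. Unset Printing Implicit Defensive.
Import Order.TTheory GRing.Theory Num.Theory.
Local Open Scope ring_scope.

(* Exponents (alpha, n_1, ..., n_k) live in R x Z^k, modelled as R * 'rV[int]_k
   (an additive group: componentwise addition). *)
Definition expo (R : realType) (k : nat) := (R * 'rV[int]_k)%type.

Definition vec_lexlt (k : nat) (u v : 'rV[int]_k) : Prop :=
  exists i : 'I_k, (forall j : 'I_k, (j < i)%N -> u ord0 j = v ord0 j) /\ u ord0 i < v ord0 i.

Definition lexlt (R : realType) (k : nat) (p q : expo R k) : Prop :=
  p.1 < q.1 \/ (p.1 = q.1 /\ vec_lexlt p.2 q.2).
Definition lexle (R : realType) (k : nat) (p q : expo R k) : Prop :=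
  p = q \/ lexlt p q.

Definition well_ordered (R : realType) (k : nat) (X : expo R k -> Prop) : Prop :=
  forall A : expo R k -> Prop, (forall x, A x -> X x) -> (exists x, A x) ->
    exists x, A x /\ forall y, A y -> lexle x y.

(* A formal sum  sum a_{alpha,n} z^alpha l_1^{n_1} ... l_k^{n_k}  is given by its
   coefficient function; its support. *)
Definition Supp (R : realType) (k : nat) (c : R -> 'rV[int]_k -> R) : expo R k -> Prop :=
  fun p => c p.1 p.2 != 0.

Definition in_Lk (R : realType) (k : nat) (c : R -> 'rV[int]_k -> R) : Prop :=
  (forall p, Supp c p -> 0 <= p.1) /\ well_ordered (Supp c).

Definition e_z (R : realType) (k : nat) : expo R k := (1, 0).

(* f = lambda z + h.o.t.: coefficient of z is lambda and every other exponent in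
   the support is lexicographically larger than (1, 0). *)
Definition leading_lambda_z (R : realType) (k : nat) (c : R -> 'rV[int]_k -> R)
    (lam : R) : Prop :=
  c 1 0 = lam /\ forall p, Supp c p -> p <> e_z R k -> lexlt (e_z R k) p.

Definition sub_lambda_id (R : realType) (k : nat) (c : R -> 'rV[int]_k -> R) (lam : R)
  : R -> 'rV[int]_k -> R :=
  fun a m => c a m - (if (a == 1) && (m == 0) then lam else 0).

Inductive sgroup_gen (R : realType) (k : nat) (S : expo R k -> Prop) : expo R k -> Prop :=
  | sg_base x : S x -> sgroup_gen S x
  | sg_add x y : sgroup_gen S x -> sgroup_gen S y -> sgroup_gen S (x + y).

Definition unit_expo (R : realType) (k : nat) (i : 'I_k) : expo R k := (0, delta_mx 0 i).

Definition W1_gens (R : realType) (k : nat) (c : R -> 'rV[int]_k -> R) (lam : R)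
  : expo R k -> Prop :=
  fun p => Supp c p
        \/ (exists q, Supp (sub_lambda_id c lam) q /\ p = (q.1 - 1, q.2))
        \/ (exists i : 'I_k, p = @unit_expo R k i).

Definition step_set (R : realType) (k : nat) (n : nat) (X : expo R k -> Prop)
  : expo R k -> Prop :=
  fun p => exists b : 'I_n.+1 -> expo R k,
      (forall i, X (b i) /\ 1 < (b i).1) /\
      p = \sum_(i < n.+1) b i - (n%:R, 0).

(* Wseq c lam n = W_{n+1}. *)
Fixpoint Wseq (R : realType) (k : nat) (c : R -> 'rV[int]_k -> R) (lam : R) (n : nat)
  : expo R k -> Prop :=
  match n with
  | O => sgroup_gen (W1_gens c lam)
  | S n' => sgroup_gen (fun p => Wseq c lam n' p \/ step_set n'.+1 (Wseq c lam n') p)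
  end.

Definition W (R : realType) (k : nat) (c : R -> 'rV[int]_k -> R) (lam : R)
  : expo R k -> Prop := fun p => exists n, Wseq c lam n p.

Definition Wbeta (R : realType) (k : nat) (c : R -> 'rV[int]_k -> R) (lam beta : R)
  : expo R k -> Prop := fun p => W c lam p /\ beta <= p.1.

(* Main.v *)
Require Import Defs.
From HB Require Import structures.
From mathcomp Require Import all_boot all_order all_algebra.
From mathcomp Require Import reals.
From Stdlib Require Import ClassicalEpsilon.
Import Order.TTheory GRing.Theory Num.Theory.
Local Open Scope ring_scope.
Set Implicit Arguments. Unset Strict Implicit.

Lemma vlt_irr (k : nat) (u : 'rV[int]_k) : ~ vec_lexlt u u.
Proof. by case=> i [_]; rewrite ltxx. Qed.

Lemma vlt_trans (k : nat) (u v w : 'rV[int]_k) :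
  vec_lexlt u v -> vec_lexlt v w -> vec_lexlt u w.
Proof.
case=> i [Hi1 Hi2] [j [Hj1 Hj2]].
case: (ltngtP i j) => [ij|ji|ij].
- exists i; split; last by rewrite -(Hj1 i ij).
  by move=> l li; rewrite Hi1 // Hj1 //; apply: ltn_trans li ij.
- exists j; split; last by rewrite Hi1.
  by move=> l lj; rewrite Hi1 ?Hj1 //; apply: ltn_trans lj ji.
- have e : i = j by apply: val_inj.
  subst j; exists i; split; first by move=> l li; rewrite Hi1 ?Hj1.
  exact: lt_trans Hi2 Hj2.
Qed.

Lemma vlt_add (k : nat) (u v w : 'rV[int]_k) :
  vec_lexlt u v -> vec_lexlt (u + w) (v + w).
Proof.
case=> i [H1 H2]; exists i; split.
  by move=> j ji; rewrite !mxE H1.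
by rewrite !mxE ltrD2r.
Qed.

Lemma vlt_total (k : nat) (u v : 'rV[int]_k) :
  u = v \/ vec_lexlt u v \/ vec_lexlt v u.
Proof.
pose P := fun n : nat => [exists j : 'I_k, (val j == n) && (u ord0 j != v ord0 j)].
case: (boolP [exists j : 'I_k, u ord0 j != v ord0 j]) => [Ex|].
  have Ex' : exists n, P n.
    by case/existsP: Ex => j Pj; exists (val j); apply/existsP; exists j; rewrite eqxx.
  case: (ex_minnP Ex') => n /existsP [j /andP [/eqP jn ne]] Hmin.
  have pre : forall l : 'I_k, (l < j)%N -> u ord0 l = v ord0 l.
    move=> l lj; apply/eqP; apply/negP => /negP ne'.
    have : P l by apply/existsP; exists l; rewrite eqxx ne'.
    by move/Hmin; rewrite -jn leqNgt lj.
  right; case: (ltgtP (u ord0 j) (v ord0 j)) => [h|h|h].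
  - by left; exists j.
  - by right; exists j; split => // l lj; rewrite pre.
  - by rewrite h eqxx in ne.
move/existsPn => H; left; apply/rowP => j.
move: (H j); rewrite negbK => /eqP E.
by have -> : (0 : 'I_1) = ord0 by apply: val_inj.
Qed.

Lemma lt_irr (R : realType) (k : nat) (p : expo R k) : ~ lexlt p p.
Proof. by case; [rewrite ltxx|case=> _ /vlt_irr]. Qed.

Lemma lt_trans' (R : realType) (k : nat) (p q r : expo R k) :
  lexlt p q -> lexlt q r -> lexlt p r.
Proof.
case=> [h1|[e1 h1]] [h2|[e2 h2]].
- by left; apply: lt_trans h1 h2.
- by left; rewrite -e2.
- by left; rewrite e1.
- by right; split; [rewrite e1 | apply: vlt_trans h1 h2].
Qed.

Lemma lt_add (R : realType) (k : nat) (p q r : expo R k) :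
  lexlt p q -> lexlt (p + r) (q + r).
Proof.
case=> [h|[e h]]; first by left; rewrite /= ltrD2r.
by right; split; [rewrite /= e | exact: vlt_add].
Qed.

Lemma lt_total (R : realType) (k : nat) (p q : expo R k) :
  p = q \/ lexlt p q \/ lexlt q p.
Proof.
case: (ltgtP p.1 q.1) => [h|h|h]; first by right; left; left.
  by right; right; left.
case: (vlt_total p.2 q.2) => [e|[h'|h']].
- by left; case: p q h e => [a b] [c d] /= -> ->.
- by right; left; right.
- by right; right; right.
Qed.

Lemma le_refl' (R : realType) (k : nat) (p : expo R k) : lexle p p.
Proof. by left. Qed.

Lemma le_trans' (R : realType) (k : nat) (p q r : expo R k) :
  lexle p q -> lexle q r -> lexle p r.
Proof.
case=> [->|h1] // [<-|h2]; first by right.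
by right; apply: lt_trans' h1 h2.
Qed.

Lemma le_lt_trans' (R : realType) (k : nat) (p q r : expo R k) :
  lexle p q -> lexlt q r -> lexlt p r.
Proof. by case=> [->|h1] // h2; apply: lt_trans' h1 h2. Qed.

Lemma lt_le_trans' (R : realType) (k : nat) (p q r : expo R k) :
  lexlt p q -> lexle q r -> lexlt p r.
Proof. by move=> h1 [<-|h2] //; apply: lt_trans' h1 h2. Qed.

Lemma le_total' (R : realType) (k : nat) (p q : expo R k) :
  lexle p q \/ lexlt q p.
Proof. by case: (lt_total p q) => [->|[h|h]]; [left; left|left; right|right]. Qed.

Lemma lt_nle (R : realType) (k : nat) (p q : expo R k) :
  lexlt q p -> ~ lexle p q.
Proof. by move=> h1 h2; apply: (lt_irr (lt_le_trans' h1 h2)). Qed.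

Lemma le_add (R : realType) (k : nat) (p q r : expo R k) :
  lexle p q -> lexle (p + r) (q + r).
Proof. by case=> [->|h]; [left|right; apply: lt_add]. Qed.

Lemma lt_le_add (R : realType) (k : nat) (a b c d : expo R k) :
  lexlt a b -> lexle c d -> lexlt (a + c) (b + d).
Proof.
move=> h1 h2; apply: (lt_le_trans' (q := b + c)); first exact: lt_add.
by rewrite ![b + _]addrC; apply: le_add.
Qed.

Lemma le_opp (R : realType) (k : nat) (p q : expo R k) :
  lexle p q -> lexle (- q) (- p).
Proof.
move=> h; have := le_add (- p - q) h.
by rewrite addrA subrr add0r addrCA subrr addr0.
Qed.

Lemma lt_addr_pos (R : realType) (k : nat) (p q : expo R k) :
  lexlt 0 q -> lexlt p (q + p).
Proof. by move=> h; have := lt_add p h; rewrite add0r. Qed.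

Lemma wo_sub (R : realType) (k : nat) (X Y : expo R k -> Prop) :
  (forall x, Y x -> X x) -> well_ordered X -> well_ordered Y.
Proof. by move=> s w A AY; apply: w => x /AY /s. Qed.

Lemma wo_union (R : realType) (k : nat) (X Y : expo R k -> Prop) :
  well_ordered X -> well_ordered Y -> well_ordered (fun x => X x \/ Y x).
Proof.
move=> wX wY A AXY [a Aa].
case: (classic (exists x, A x /\ X x)) => [EX|NX].
  have [x [[Ax Xx] mx]] := wX (fun x => A x /\ X x) (fun x (h : _ /\ _) => proj2 h) EX.
  case: (classic (exists y, A y /\ Y y)) => [EY|NY].
    have [y [[Ay Yy] my]] := wY (fun x => A x /\ Y x) (fun x (h : _ /\ _) => proj2 h) EY.
    case: (le_total' x y) => [xy|yx].
      exists x; split => // z Az; case: (AXY z Az) => [Xz|Yz].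
        exact: mx.
      exact: (le_trans' xy (my z (conj Az Yz))).
    exists y; split => // z Az; case: (AXY z Az) => [Xz|Yz].
      exact: (le_trans' (or_intror yx) (mx z (conj Az Xz))).
    exact: my.
  exists x; split => // z Az; case: (AXY z Az) => [Xz|Yz]; first exact: mx.
  by case: NY; exists z.
have EY : exists y, A y /\ Y y.
  by exists a; split => //; case: (AXY a Aa) => // Xa; case: NX; exists a.
have [y [[Ay Yy] my]] := wY (fun x => A x /\ Y x) (fun x (h : _ /\ _) => proj2 h) EY.
exists y; split => // z Az; case: (AXY z Az) => [Xz|Yz]; last exact: my.
by case: NX; exists z.
Qed.

Lemma wo_single (R : realType) (k : nat) (a : expo R k) : well_ordered (fun x => x = a).
Proof.
move=> A AX [x Ax]; exists x; split => // y Ay.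
by rewrite (AX _ Ax) (AX _ Ay); left.
Qed.

Lemma wo_seq (R : realType) (k : nat) (l : seq (expo R k)) : well_ordered (fun x => x \in l).
Proof.
elim: l => [|a l IH].
  by move=> A AX [x /AX].
apply: (wo_sub (X := fun x => x = a \/ x \in l)).
  by move=> x; rewrite in_cons => /orP [/eqP|]; [left|right].
exact: (wo_union (wo_single (a:=a)) IH).
Qed.

Lemma wo_shift (R : realType) (k : nat) (X : expo R k -> Prop) (t : expo R k) :
  well_ordered X -> well_ordered (fun y => X (y + t)).
Proof.
move=> wX A AX [a Aa].
have H1 : forall x, A (x - t) -> X x by move=> x /AX; rewrite subrK.
have H2 : exists x, A (x - t) by exists (a + t); rewrite addrK.
have [x [Ax mx]] := wX (fun x => A (x - t)) H1 H2.
exists (x - t); split => // y Ay.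
have Ay' : A (y + t - t) by rewrite addrK.
have := le_add (- t) (mx (y + t) Ay').
by rewrite addrK.
Qed.

Lemma subseq_lemma (R : realType) (k : nat) (X : expo R k -> Prop) (g : nat -> expo R k) :
  well_ordered X -> (forall n, X (g n)) ->
  exists psi : nat -> nat, forall i, (i < psi i)%N /\ forall m, (i < m)%N -> lexle (g (psi i)) (g m).
Proof.
move=> wX Xg.
have H : forall i, exists n, (i < n)%N /\ forall m, (i < m)%N -> lexle (g n) (g m).
  move=> i.
  have S1 : forall x, (exists m, (i < m)%N /\ x = g m) -> X x.
    by move=> x [m [_ ->]].
  have S2 : exists x, exists m, (i < m)%N /\ x = g m by exists (g i.+1), i.+1.
  have [x [[n [lt ->]] mx]] := wX _ S1 S2.
  by exists n; split => // m im; apply: mx; exists m.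
exists (fun i => proj1_sig (constructive_indefinite_description _ (H i))).
move=> i; exact: (proj2_sig (constructive_indefinite_description _ (H i))).
Qed.

Lemma wo_noseq (R : realType) (k : nat) (M : expo R k -> Prop) :
  (forall s : nat -> expo R k, (forall n, M (s n)) -> ~ (forall n, lexlt (s n.+1) (s n))) ->
  well_ordered M.
Proof.
move=> H A AM [a Aa].
apply: NNPP => Nmin.
have step : forall x : {x | A x}, exists y : {y | A y}, lexlt (proj1_sig y) (proj1_sig x).
  case=> x Ax; apply: NNPP => N; apply: Nmin; exists x; split => // y Ay.
  case: (le_total' x y) => // yx; case: N; by exists (exist _ y Ay).
pose nxt := fun x => proj1_sig (constructive_indefinite_description _ (step x)).
pose s := fun n => iter n nxt (exist _ a Aa).
apply: (H (fun n => proj1_sig (s n))).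
  by move=> n; apply: AM; exact: (proj2_sig (s n)).
move=> n; rewrite /s iterS.
exact: (proj2_sig (constructive_indefinite_description _ (step _))).
Qed.

Definition ssum (R : realType) (k : nat) (l : seq (expo R k)) : expo R k := \sum_(y <- l) y.

Definition Mon (R : realType) (k : nat) (H : expo R k -> Prop) : expo R k -> Prop :=
  fun x => exists l : seq (expo R k), (forall y, y \in l -> H y) /\ x = ssum l.

Definition bad (R : realType) (k : nat) (H : expo R k -> Prop) (s : nat -> seq (expo R k)) :=
  (forall n y, y \in s n -> H y) /\ forall n, lexlt (ssum (s n.+1)) (ssum (s n)).

Lemma ssum_cons (R : realType) (k : nat) (a : expo R k) l : ssum (a :: l) = a + ssum l.
Proof. by rewrite /ssum big_cons. Qed.

Lemma ssum_pos (R : realType) (k : nat) (l : seq (expo R k)) :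
  (forall y, y \in l -> lexlt 0 y) -> lexle 0 (ssum l).
Proof.
elim: l => [|a l IH] H; first by rewrite /ssum big_nil; left.
rewrite ssum_cons; right; rewrite -[0](addr0 0).
apply: lt_le_add; first by apply: H; rewrite mem_head.
by apply: IH => y yl; apply: H; rewrite in_cons yl orbT.
Qed.

Lemma bad_dec (R : realType) (k : nat) (H : expo R k -> Prop) s :
  bad H s -> forall m n, (m < n)%N -> lexlt (ssum (s n)) (ssum (s m)).
Proof.
move=> [_ B] m n; elim: n => // n IH; rewrite ltnS leq_eqVlt => /orP [/eqP ->|lt].
  exact: B.
exact: lt_trans' (B n) (IH lt).
Qed.

Lemma min_nat (P : nat -> Prop) : (exists n, P n) -> exists n, P n /\ forall m, P m -> (n <= m)%N.
Proof.
move=> [n Pn]; elim/ltn_ind: n Pn => n IH Pn.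
case: (classic (exists m, P m /\ (m < n)%N)) => [[m [Pm lt]]|N].
  exact: IH m lt Pm.
exists n; split => // m Pm; rewrite leqNgt; apply/negP => lt; apply: N; by exists m.
Qed.

Lemma minbad (R : realType) (k : nat) (H : expo R k -> Prop) (s0 : nat -> seq (expo R k)) :
  bad H s0 -> exists mbs : nat -> seq (expo R k), bad H mbs /\
    forall n s, bad H s -> (forall i, (i < n)%N -> s i = mbs i) -> (size (mbs n) <= size (s n))%N.
Proof.
move=> b0.
pose BT := {s : nat -> seq (expo R k) | bad H s}.
have Fex : forall (s : BT) (n : nat), exists s' : BT,
    (forall i, (i < n)%N -> proj1_sig s' i = proj1_sig s i) /\
    forall s'' : BT, (forall i, (i < n)%N -> proj1_sig s'' i = proj1_sig s i) ->
       (size (proj1_sig s' n) <= size (proj1_sig s'' n))%N.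
  move=> s n.
  have [m [[s' [ag sz]] mm]] := min_nat (P := fun m => exists s' : BT,
    (forall i, (i < n)%N -> proj1_sig s' i = proj1_sig s i) /\ size (proj1_sig s' n) = m)
    (ex_intro _ _ (ex_intro _ s (conj (fun i _ => erefl) erefl))).
  exists s'; split => // s'' ag''; rewrite sz; apply: mm; by exists s''.
pose F := fun s n => proj1_sig (constructive_indefinite_description _ (Fex s n)).
have FS := fun s n => proj2_sig (constructive_indefinite_description _ (Fex s n)).
pose t := fix t n := match n with 0 => F (exist _ s0 b0) 0 | n'.+1 => F (t n') n'.+1 end.
pose T := fun n => proj1_sig (t n).
have agree : forall n i, (i < n.+1)%N -> T n.+1 i = T n i.
  by move=> n i lt; rewrite /T /=; case: (FS (t n) n.+1) => [A _]; apply: A.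
have stab : forall n m, (n <= m)%N -> T m n = T n n.
  move=> n; elim => [|m IH]; first by rewrite leqn0 => /eqP ->.
  rewrite leq_eqVlt => /orP [/eqP ->//|lt].
  by rewrite agree // IH.
exists (fun n => T n n); split.
  split.
    by move=> n y yin; case: (proj2_sig (t n)) => [B _]; exact: B n y yin.
  move=> n; rewrite -(stab n n.+1) //.
  by case: (proj2_sig (t n.+1)) => [_ B]; apply: B.
move=> n s bs ag; case: n ag => [|n] ag.
  by case: (FS (exist _ s0 b0) 0) => [_ B]; apply: (B (exist _ s bs)).
case: (FS (t n) n.+1) => [_ B]; apply: (B (exist _ s bs)) => i lt /=.
by rewrite ag // -/(T n) stab // -ltnS.
Qed.

Lemma neumann (R : realType) (k : nat) (H : expo R k -> Prop) :
  (forall h, H h -> lexlt 0 h) -> well_ordered H -> well_ordered (Mon H).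
Proof.
move=> Hpos wH; apply: wo_noseq => x Mx dec.
have rep := fun n => constructive_indefinite_description _ (Mx n).
pose s0 := fun n => proj1_sig (rep n).
have b0 : bad H s0.
  split; first by move=> n y; case: (proj2_sig (rep n)) => A _; apply: A.
  move=> n; case: (proj2_sig (rep n)) => _ <-; case: (proj2_sig (rep n.+1)) => _ <-.
  exact: dec.
have [m [bm mmin]] := minbad b0.
have posm : forall n y, y \in m n -> lexlt 0 y by move=> n y /(proj1 bm n) /Hpos.
have ne : forall n, m n != [::].
  move=> n; apply/eqP => e.
  have := proj2 bm n; rewrite e /ssum big_nil => h.
  by apply: (lt_nle h); apply: ssum_pos; apply: posm.
pose g := fun n => head 0 (m n).
have mE : forall n, m n = g n :: behead (m n).
  by move=> n; rewrite /g; case: (m n) (ne n).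
have Hg : forall n, H (g n) by move=> n; apply: (proj1 bm n); rewrite mE mem_head.
have [psi Psi] := subseq_lemma wH Hg.
pose phi := fix phi j := match j with 0 => psi 0 | j'.+1 => psi (phi j') end.
have phiP : forall j, exists a, phi j = psi a /\ (a < phi j)%N.
  case=> [|j]; first by exists 0%N; split => //; case: (Psi 0%N).
  by exists (phi j); split => //; case: (Psi (phi j)).
have phiS : forall j, (phi j < phi j.+1)%N by move=> j /=; case: (Psi (phi j)).
have gmono : forall j, lexle (g (phi j)) (g (phi j.+1)).
  move=> j; have [a [e lt]] := phiP j.
  have lt2 : (a < phi j.+1)%N := ltn_trans lt (phiS j).
  have := proj2 (Psi a) _ lt2; by rewrite -e.
have sumE : forall n, ssum (m n) = g n + ssum (behead (m n)).
  by move=> n; rewrite {1}mE ssum_cons.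
pose N := psi 0.
have N0 : (0 < N)%N by case: (Psi 0%N).
pose s := fun i => if (i < N)%N then m i else behead (m (phi (i - N)%N)).
have bs : bad H s.
  split.
    move=> n y; rewrite /s; case: ifP => _ yin; first exact: (proj1 bm _ y yin).
    by apply: (proj1 bm (phi (n - N)%N) y); rewrite mE in_cons yin orbT.
  move=> n; rewrite /s; case: (ltngtP n.+1 N) => [lt|gt|e].
  - exact: (proj2 bm n).
  - rewrite subSn; last by rewrite -ltnS.
    have -> : phi (n - N)%N.+1 = psi (phi (n - N)%N) by [].
    have h1 := bad_dec bm (phiS (n - N)%N).
    rewrite !sumE in h1.
    have h2 := le_opp (gmono (n - N)%N).
    have := lt_le_add h1 h2.
    rewrite [g _ + _]addrC [g (phi _) + _]addrC -!addrA !subrr !addr0.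
    by [].
  - rewrite e subnn /= -/N; apply: (lt_trans' (q := ssum (m N))).
      rewrite [X in lexlt _ X]sumE; apply: lt_addr_pos; apply: Hpos; exact: Hg.
    by rewrite -e; apply: (proj2 bm n).
have ag : forall i, (i < N)%N -> s i = m i by move=> i lt; rewrite /s lt.
have := mmin N s bs ag; rewrite /s ltnn subnn /= -/N.
by rewrite [X in (size X <= _)%N]mE /= ltnn.
Qed.

Lemma sum_fst (R : realType) (k n : nat) (b : 'I_n -> expo R k) :
  (\sum_(i < n) b i).1 = \sum_(i < n) (b i).1.
Proof.
elim: n b => [|n IH] b; first by rewrite !big_ord0.
by rewrite !big_ord_recr /= IH.
Qed.

Lemma sum_gt1 (R : realType) (n : nat) (f : 'I_n.+1 -> R) :
  (forall i, 1 < f i) -> n.+1%:R < \sum_(i < n.+1) f i.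
Proof.
elim: n f => [|n IH] f H; first by rewrite big_ord1; apply: H.
rewrite big_ord_recr /= -natr1.
apply: ltrD; last exact: H.
exact: IH.
Qed.

Lemma step_gt1 (R : realType) (k n : nat) (b : 'I_n.+1 -> expo R k) :
  (forall i, 1 < (b i).1) -> 1 < (\sum_(i < n.+1) b i - (n%:R, 0)).1.
Proof.
move=> H; rewrite /= sum_fst.
have := sum_gt1 H; rewrite -natr1 => h.
by rewrite ltrBrDl.
Qed.

Lemma Wseq_add (R : realType) (k : nat) c lam n (x y : expo R k) :
  Wseq c lam n x -> Wseq c lam n y -> Wseq c lam n (x + y).
Proof. by case: n => [|n]; apply: sg_add. Qed.

Lemma Wseq_S (R : realType) (k : nat) c lam n (x : expo R k) :
  Wseq c lam n x -> Wseq c lam n.+1 x.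
Proof. by move=> h; apply: sg_base; left. Qed.

Lemma Wseq_le (R : realType) (k : nat) c lam m n (x : expo R k) :
  (m <= n)%N -> Wseq c lam m x -> Wseq c lam n x.
Proof.
move=> mn h; elim: n mn => [|n IH]; first by rewrite leqn0 => /eqP <-.
rewrite leq_eqVlt => /orP [/eqP <-//|lt]; apply: Wseq_S; exact: IH.
Qed.

Lemma W_add (R : realType) (k : nat) c lam (x y : expo R k) :
  W c lam x -> W c lam y -> W c lam (x + y).
Proof.
move=> [n hx] [m hy]; exists (maxn n m); apply: Wseq_add.
  by apply: Wseq_le hx; rewrite leq_maxl.
by apply: Wseq_le hy; rewrite leq_maxr.
Qed.

Lemma supp_sub (R : realType) (k : nat) c (lam : R) (q : expo R k) :
  leading_lambda_z c lam -> Supp (sub_lambda_id c lam) q -> Supp c q /\ q <> e_z R k.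
Proof.
move=> [c1 _]; rewrite /Supp /sub_lambda_id.
case: q => a m /=; case: (boolP ((a == 1) && (m == 0))) => [/andP [/eqP ea /eqP em]|h].
  by rewrite ea em c1 subrr eqxx.
rewrite subr0 => h1; split => // e; case: e => ea em.
by rewrite ea em !eqxx in h.
Qed.

Lemma gens_ge1 (R : realType) (k : nat) c (lam : R) (q : expo R k) :
  leading_lambda_z c lam -> Supp (sub_lambda_id c lam) q -> 1 <= q.1.
Proof.
move=> L S; have [S' ne] := supp_sub L S.
by case: (proj2 L q S' ne) => [/ltW|[<- _]].
Qed.

Lemma gens_nonneg (R : realType) (k : nat) c (lam : R) (p : expo R k) :
  in_Lk c -> leading_lambda_z c lam -> W1_gens c lam p -> 0 <= p.1.
Proof.
move=> [I _] L [S|[[q [S ->]]|[i ->]]] //.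
- exact: I.
- by rewrite /= subr_ge0; apply: gens_ge1 S.
Qed.

Lemma Wseq_nonneg (R : realType) (k : nat) c (lam : R) n (x : expo R k) :
  in_Lk c -> leading_lambda_z c lam -> Wseq c lam n x -> 0 <= x.1.
Proof.
move=> I L; elim: n x => [|n IH] x /=.
  elim => [y /(gens_nonneg I L)//|y z _ hy _ hz]; by rewrite /= addr_ge0.
elim => [y [/IH //|[b [Hb ->]]]|y z _ hy _ hz]; last by rewrite /= addr_ge0.
by apply: ltW; apply: lt_trans (step_gt1 (fun i => proj2 (Hb i))).
Qed.

Lemma Wseq_le1 (R : realType) (k : nat) c (lam : R) n (x : expo R k) :
  in_Lk c -> leading_lambda_z c lam -> Wseq c lam n x -> x.1 <= 1 -> Wseq c lam 0 x.
Proof.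
move=> I L; elim: n x => [//|n IH] x /=.
elim => [y [/IH //|[b [Hb ->]]]|y z hy IHy hz IHz].
  by move=> h; have := step_gt1 (fun i => proj2 (Hb i)); rewrite ltNge h.
move=> h; have y0 := Wseq_nonneg I L (n := n.+1) hy.
have z0 := Wseq_nonneg I L (n := n.+1) hz.
apply: sg_add; [apply: IHy|apply: IHz]; rewrite /= in h.
  by apply: le_trans h; rewrite lerDl.
by apply: le_trans h; rewrite lerDr.
Qed.

Lemma pairE' (R : realType) (k : nat) (x y : expo R k) : x.1 = y.1 -> x.2 = y.2 -> x = y.
Proof. by case: x y => [a b] [c d] /= -> ->. Qed.

Lemma pairn (R : realType) (k n : nat) : ((n%:R : R), (0 : 'rV[int]_k)) = e_z R k *+ n.
Proof.
elim: n => [|n IH]; first by rewrite mulr0n.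
by rewrite [RHS]mulrSr -IH; apply: pairE' => /=; rewrite ?natr1 ?addr0.
Qed.

Definition Step (R : realType) (k : nat) c (lam : R) (j : nat) (x : expo R k) :=
  (0 < j)%N /\ exists b : 'I_j -> expo R k,
    (forall i, Wseq c lam j.-2 (b i) /\ 1 < (b i).1) /\
    x = \sum_(i < j) b i - e_z R k *+ j.-1.

Lemma Step1 (R : realType) (k : nat) c (lam : R) (x : expo R k) :
  Wseq c lam 0 x -> 1 < x.1 -> Step c lam 1 x.
Proof.
move=> h1 h2; split => //; exists (fun _ => x); split => //.
by rewrite big_ord1 mulr0n subr0.
Qed.

Lemma Step_W (R : realType) (k : nat) c (lam : R) j (x : expo R k) :
  Step c lam j x -> W c lam x.
Proof.
case: j => [[//]|[|j]] [_ [b [Hb ->]]].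
  by exists 0%N; rewrite big_ord1 mulr0n subr0; case: (Hb ord0).
exists j.+1; apply: sg_base; right; exists b; split => //.
by rewrite pairn.
Qed.

Lemma Step_comb (R : realType) (k : nat) c (lam : R) j l (x y : expo R k) :
  Step c lam j x -> Step c lam l y -> Step c lam (j + l) (x + y - e_z R k).
Proof.
case: j => [[//]|j] [_ [b [Hb ->]]]; case: l => [[//]|l] [_ [b' [Hb' ->]]].
split; first by rewrite addn_gt0.
exists (fun i => match split i with inl a => b a | inr a => b' a end); split.
  move=> i; case: (split i) => a.
    case: (Hb a) => h1 h2; split => //; apply: Wseq_le h1.
    by rewrite -!subn2 leq_sub2r // leq_addr.
  case: (Hb' a) => h1 h2; split => //; apply: Wseq_le h1.
  by rewrite -!subn2 leq_sub2r // addSn; apply: leq_trans (leq_addl j _) _.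
rewrite big_split_ord /=.
have E1 : \sum_(i < j.+1) match split (lshift l.+1 i) with inl a => b a | inr a => b' a end
   = \sum_(i < j.+1) b i.
  by apply: eq_bigr => i _; have := unsplitK (inl _ i : 'I_j.+1 + 'I_l.+1) => /= ->.
have E2 : \sum_(i < l.+1) match split (rshift j.+1 i) with inl a => b a | inr a => b' a end
   = \sum_(i < l.+1) b' i.
  by apply: eq_bigr => i _; have := unsplitK (inr _ i : 'I_j.+1 + 'I_l.+1) => /= ->.
rewrite E1 E2 addnS mulrSr mulrnDr !opprD !addrA; congr (_ - _ - _).
by rewrite addrAC.
Qed.

Lemma Dec (R : realType) (k : nat) c (lam : R) n (x : expo R k) :
  in_Lk c -> leading_lambda_z c lam -> Wseq c lam n x -> 1 < x.1 ->
  exists j s w, Step c lam j s /\ (w = 0 \/ W c lam w) /\ x = s + w.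
Proof.
move=> I L; elim: n x => [|n IH] x hx h1.
  by exists 1%N, x, 0; split; [exact: Step1|split; [left|rewrite addr0]].
have hxW : W c lam x by exists n.+1.
move: hx h1 hxW; rewrite /=.
elim => [y [Hy|[b [Hb ->]]]|y z hy IHy hz IHz] h1 hW.
    exact: IH.
  by exists n.+2, (\sum_(i < n.+2) b i - (n.+1%:R, 0)), 0; split; last (split; [left|rewrite addr0]);
     split => //; exists b; split => //; rewrite pairn.
have Wy : W c lam y by exists n.+1.
have Wz : W c lam z by exists n.+1.
case: (ltrP 1 y.1) => hy1.
  have [j [s [w [S [Hw ->]]]]] := IHy hy1 Wy.
  exists j, s, (w + z); split => //; split; last by rewrite addrA.
  by right; case: Hw => [->|Hw]; [rewrite add0r|apply: W_add].
case: (ltrP 1 z.1) => hz1.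
  have [j [s [w [S [Hw ->]]]]] := IHz hz1 Wz.
  exists j, s, (w + y); split => //; split; last by rewrite [LHS]addrC -addrA.
  by right; case: Hw => [->|Hw]; [rewrite add0r|apply: W_add].
exists 1%N, (y + z), 0; split; last by split; [left|rewrite addr0].
apply: Step1 => //; apply: sg_add; apply: (Wseq_le1 I L (n := n.+1)) => //.
Qed.

Lemma zm4 (V : zmodType) (a b c d e : V) : a + b + (c + d) - e = a + c - e + (b + d).
Proof. by rewrite addrACA [RHS]addrAC. Qed.

Lemma closure2 (R : realType) (k : nat) c (lam : R) (x y : expo R k) :
  in_Lk c -> leading_lambda_z c lam -> W c lam x -> W c lam y -> 1 < x.1 -> 1 < y.1 ->
  W c lam (x + y - e_z R k).
Proof.
move=> I L [n hx] [m hy] h1 h2.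
have [j [s [w [S [Hw ->]]]]] := Dec I L hx h1.
have [j' [s' [w' [S' [Hw' ->]]]]] := Dec I L hy h2.
have E : s + w + (s' + w') - e_z R k = (s + s' - e_z R k) + (w + w').
  exact: zm4.
rewrite E; have SW := Step_W (Step_comb S S').
case: Hw => [->|Hw]; case: Hw' => [->|Hw']; rewrite ?add0r ?addr0 //; apply: W_add => //.
exact: W_add.
Qed.

Lemma Mon_add (R : realType) (k : nat) (H : expo R k -> Prop) x y :
  Mon H x -> Mon H y -> Mon H (x + y).
Proof.
move=> [l1 [H1 ->]] [l2 [H2 ->]]; exists (l1 ++ l2); split; last by rewrite /ssum big_cat.
by move=> z; rewrite mem_cat => /orP [/H1|/H2].
Qed.

Lemma Mon_base (R : realType) (k : nat) (H : expo R k -> Prop) x : H x -> Mon H x.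
Proof.
move=> h; exists [:: x]; split; last by rewrite /ssum big_seq1.
by move=> z; rewrite inE => /eqP ->.
Qed.

Lemma Mon_sum (R : realType) (k : nat) (H : expo R k -> Prop) n (f : 'I_n.+1 -> expo R k) :
  (forall i, Mon H (f i)) -> Mon H (\sum_(i < n.+1) f i).
Proof.
elim: n f => [|n IH] f hf; first by rewrite big_ord1.
rewrite big_ord_recr; apply: Mon_add => //; exact: IH.
Qed.

Lemma G0_pos (R : realType) (k : nat) c (lam : R) (p : expo R k) :
  leading_lambda_z c lam -> W1_gens c lam p -> lexlt 0 p.
Proof.
move=> L [S|[[q [S ->]]|[i ->]]].
- have ez : lexlt 0 (e_z R k) by left; rewrite /= ltr01.
  case: (classic (p = e_z R k)) => [->//|ne].
  exact: lt_trans' ez (proj2 L p S ne).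
- have [S' ne] := supp_sub L S.
  have := lt_add (- e_z R k) (proj2 L q S' ne); rewrite subrr.
  have -> : (q.1 - 1, q.2) = q - e_z R k by apply: pairE' => //=; rewrite subr0.
  by [].
- right; split => //; exists i; split.
    move=> j lt; rewrite !mxE /=.
    by have -> : (j == i) = false by apply/negbTE; rewrite neq_ltn lt.
  by rewrite !mxE !eqxx.
Qed.

Lemma G0_wo (R : realType) (k : nat) (c : R -> 'rV[int]_k -> R) (lam : R) :
  in_Lk c -> leading_lambda_z c lam -> well_ordered (W1_gens c lam).
Proof.
move=> [_ wS] L.
have w2 := wo_shift (t := e_z R k) wS.
have w3 := wo_seq (l := [seq unit_expo R i | i <- enum 'I_k]).
have w := wo_union wS (wo_union w2 w3).
apply: (wo_sub _ w) => p [S|[[q [S ->]]|[i ->]]].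
- by left.
- right; left; have [S' _] := supp_sub L S.
  have -> : (q.1 - 1, q.2) + e_z R k = q by apply: pairE' => //=; rewrite ?subrK ?addr0.
  by [].
- by right; right; apply: map_f; rewrite mem_enum.
Qed.

Definition Hset (R : realType) (k : nat) (c : R -> 'rV[int]_k -> R) (lam : R) : expo R k -> Prop :=
  fun x => W1_gens c lam x \/ x = e_z R k \/
           exists y, Wseq c lam 0 y /\ 1 < y.1 /\ x = y - e_z R k.

Lemma W0_Mon (R : realType) (k : nat) (c : R -> 'rV[int]_k -> R) (lam : R) x :
  Wseq c lam 0 x -> Mon (W1_gens c lam) x.
Proof. by elim => [y h|y z _ h1 _ h2]; [apply: Mon_base|apply: Mon_add]. Qed.

Lemma W_Mon (R : realType) (k : nat) (c : R -> 'rV[int]_k -> R) (lam : R) n x :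
  in_Lk c -> leading_lambda_z c lam -> Wseq c lam n x ->
  Mon (Hset c lam) x /\ (1 < x.1 -> Mon (Hset c lam) (x - e_z R k)).
Proof.
move=> I L; elim: n x => [|n IH] x hx.
  split.
    have [l [Hl ->]] := W0_Mon hx; exists l; split => // y /Hl; by left.
  by move=> h; apply: Mon_base; right; right; exists x.
move: hx => /=; elim => [y [/IH//|[b [Hb ->]]]|y z hy IHy hz IHz].
  have Mb : forall i, Mon (Hset c lam) (b i - e_z R k).
    by move=> i; case: (Hb i) => h1 h2; exact: (proj2 (IH _ h1) h2).
  have E : \sum_(i < n.+2) b i - (n.+1%:R, 0) - e_z R k = \sum_(i < n.+2) (b i - e_z R k).
    rewrite sumrB sumr_const card_ord pairn -addrA -opprD.
    by rewrite -mulrSr.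
  have ME : Mon (Hset c lam) (\sum_(i < n.+2) b i - (n.+1%:R, 0) - e_z R k).
    by rewrite E; apply: Mon_sum.
  split; last by move=> _.
  rewrite -(subrK (e_z R k) (_ - _)); apply: Mon_add => //.
  by apply: Mon_base; right; left.
split; first by apply: Mon_add; [exact: (proj1 IHy)|exact: (proj1 IHz)].
move=> h.
have Wy : Wseq c lam n.+1 y := hy.
have Wz : Wseq c lam n.+1 z := hz.
case: (ltrP 1 y.1) => hy1.
  rewrite addrAC; apply: Mon_add; [exact: (proj2 IHy hy1)|exact: (proj1 IHz)].
case: (ltrP 1 z.1) => hz1.
  rewrite -addrA; apply: Mon_add; [exact: (proj1 IHy)|exact: (proj2 IHz hz1)].
apply: Mon_base; right; right; exists (y + z); split => //.
apply: sg_add; exact: (Wseq_le1 I L (n := n.+1)).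
Qed.

Lemma Hset_pos (R : realType) (k : nat) (c : R -> 'rV[int]_k -> R) (lam : R) h :
  leading_lambda_z c lam -> Hset c lam h -> lexlt 0 h.
Proof.
move=> L [G|[->|[y [_ [y1 ->]]]]].
- exact: G0_pos L G.
- by left; rewrite /= ltr01.
- by left; rewrite /= subr_gt0.
Qed.

Lemma Hset_wo (R : realType) (k : nat) (c : R -> 'rV[int]_k -> R) (lam : R) :
  in_Lk c -> leading_lambda_z c lam -> well_ordered (Hset c lam).
Proof.
move=> I L.
have wG := G0_wo I L.
have wM := neumann (fun h => G0_pos L) wG.
have w3 := wo_shift (t := e_z R k) wM.
apply: (wo_sub _ (wo_union wG (wo_union (wo_single (a := e_z R k)) w3))).
move=> x [G|[E|[y [y0 [_ ->]]]]]; [by left|by right; left|right; right].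
by rewrite subrK; apply: W0_Mon.
Qed.

Lemma msum (R : realType) (k : nat) (c : R -> 'rV[int]_k -> R) (lam beta : R) m
    (b : 'I_m.+1 -> expo R k) :
  in_Lk c -> leading_lambda_z c lam -> 1 < beta ->
  (forall i, Wbeta c lam beta (b i)) ->
  Wbeta c lam beta (\sum_(i < m.+1) b i - (m%:R, 0)).
Proof.
move=> I L b1; elim: m b => [|m IH] b Hb.
  by rewrite big_ord1 pairn mulr0n subr0.
have [WX X1] := IH (fun i => b (widen_ord (leqnSn _) i)) (fun i => Hb _).
have [Wl l1] := Hb ord_max.
rewrite big_ord_recr /= pairn [_ *+ m.+1]mulrSr opprD addrA -pairn (addrAC _ (b ord_max)).
split.
  apply: closure2 => //; [apply: lt_le_trans b1 X1|apply: lt_le_trans b1 l1].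
rewrite /= -[beta]addr0 -(subrr 1) addrA.
apply: lerB => //; apply: lerD => //; apply: le_trans l1; exact: ltW.
Qed.

Unset Implicit Arguments. Set Strict Implicit.

Theorem proposition5p1 (R : realType) (k : nat) (c : R -> 'rV[int]_k -> R)
    (lam beta : R) :
  in_Lk c -> leading_lambda_z c lam -> 0 < lam -> lam < 1 -> 1 < beta ->
  well_ordered (Wbeta c lam beta) /\
  forall (m : nat) (b : 'I_m -> expo R k), (2 <= m)%N ->
    (forall i, Wbeta c lam beta (b i)) ->
    Wbeta c lam beta (\sum_(i < m) b i - ((m.-1)%:R, 0)).
Proof.
move=> I L _ _ b1; split.
  apply: (wo_sub _ (neumann (fun h => Hset_pos L) (Hset_wo I L))).
  by move=> x [[n hx] _]; exact: (proj1 (W_Mon I L hx)).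
case=> [//|m] b _ Hb; exact: msum.
Qed.
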